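(* Let $A,s$ be positive integers, $(\alpha,\beta)\in(\mathbb{Z}/s\mathbb{Z})^2$, and let $\ell=\mathbb{Z}v_1+\mathbb{Z}v_2=[A,b,a]$ with $(a,b)\equiv(\alpha,\beta)\pmod s$ and $Aa-b^2>0$. Let $L$ be a $\mathbb{Z}$-lattice and $w\in R(A,L)$ with $L\prec_{A,(\alpha,\beta),s}w$. If $\ell$ is represented by $L$, then there exists a representation $\sigma:\ell\to L$ with $\sigma(v_1)=w$.
   Context: All $\mathbb{Z}$-lattices are free $\mathbb{Z}$-modules of finite rank with a positive definite, integral symmetric bilinear form $B$; $Q(v)=B(v,v)$. A representation $\sigma:\ell\to L$ is a linear map preserving $B$. $[A,b,a]$ denotes the binary lattice $\mathbb{Z}v_1+\mathbb{Z}v_2$ with $Q(v_1)=A$, $B(v_1,v_2)=b$, $Q(v_2)=a$. Let $V=\mathbb{Q}L$. $R(A,L)=\{v\in L:Q(v)=A\}$. For $v\in R(A,L)$, $R_v(L,\alpha,\beta,s)=\{u\in L/sL: Q(u)\equiv\alpha,\ B(u,v)\equiv\beta\pmod s\}$, $R_v(L,L,s)=\{\tau\in O(V):\tau(sL)\subseteq L,\ \tau(v)\in L\}$, and for $v,w\in R(A,L)$, $R_{v,w}(L,s)=\{\tau\in R_v(L,L,s):\tau(v)=w\}$. We write $L\prec_{A,(\alpha,\beta),s}w$ if for every $v\in R(A,L)$ and every coset $u\in R_v(L,\alpha,\beta,s)$ there is $\tau\in R_{v,w}(L,s)$ with $\tau(\tilde u)\in L$ for all $\tilde u\in L$ with $\tilde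 u\equiv u\pmod{sL}$. *)

(* Defs.v *)
(* A Z-lattice L of rank n is modelled by a basis:
   L = Z^n (row vectors 'rV[int]_n) with integer Gram matrix G;
   V = Q L = Q^n ('rV[rat]_n); linear maps act on row vectors on the right. *)
From HB Require Import structures.
From mathcomp Require Import all_boot all_order all_algebra.
Set Implicit Arguments. Unset Strict Implicit. Unset Printing Implicit Defensive.
Import Order.TTheory GRing.Theory Num.Theory.
Local Open Scope ring_scope.

Definition Bf (R : comRingType) (n : nat) (G : 'M[R]_n) (x y : 'rV[R]_n) : R :=
  (x *m G *m y^T) 0 0.
Definition Qf (R : comRingType) (n : nat) (G : 'M[R]_n) (x : 'rV[R]_n) : R :=
  Bf G x x.

Definition lattice_gram (n : nat) (G : 'M[int]_n) : Prop :=
  G^T = G /\ forall x : 'rV[int]_n, x != 0 -> 0 < Qf G x.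

Definition toQv (n : nat) (x : 'rV[int]_n) : 'rV[rat]_n := map_mx (fun z : int => z%:~R) x.
Definition toQm (m n : nat) (G : 'M[int]_(m, n)) : 'M[rat]_(m, n) :=
  map_mx (fun z : int => z%:~R) G.

Definition inL (n : nat) (x : 'rV[rat]_n) : Prop := exists y : 'rV[int]_n, x = toQv y.

Definition congz (s x y : int) : Prop := (s %| (x - y))%Z.

Definition in_OV (n : nat) (G : 'M[int]_n) (T : 'M[rat]_n) : Prop :=
  forall x y : 'rV[rat]_n, Bf (toQm G) (x *m T) (y *m T) = Bf (toQm G) x y.

Definition R_vLL (n : nat) (G : 'M[int]_n) (s : int) (v : 'rV[int]_n) (T : 'M[rat]_n) : Prop :=
  in_OV G T /\ (forall x : 'rV[int]_n, inL ((toQv (s *: x)) *m T)) /\ inL (toQv v *m T).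

Definition R_vw (n : nat) (G : 'M[int]_n) (s : int) (v w : 'rV[int]_n) (T : 'M[rat]_n) : Prop :=
  R_vLL G s v T /\ toQv v *m T = toQv w.

(* L <_{A,(alpha,beta),s} w ; cosets u in L/sL are given by representatives u in L
   (the conditions on u only depend on u mod sL) *)
Definition prec (n : nat) (G : 'M[int]_n) (A alpha beta s : int) (w : 'rV[int]_n) : Prop :=
  forall v : 'rV[int]_n, Qf G v = A ->
  forall u : 'rV[int]_n, congz s (Qf G u) alpha -> congz s (Bf G u v) beta ->
  exists T : 'M[rat]_n, R_vw G s v w T /\
    forall ut : 'rV[int]_n, (exists x : 'rV[int]_n, ut = u + s *: x) -> inL (toQv ut *m T).

Definition gram2 (A b a : int) : 'M[int]_2 :=
  \matrix_(i < 2, j < 2)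
    (if (i : nat) == 0%N then (if (j : nat) == 0%N then A else b)
     else (if (j : nat) == 0%N then b else a)).

Definition is_rep (n : nat) (Gl : 'M[int]_2) (G : 'M[int]_n) (S : 'M[int]_(2, n)) : Prop :=
  forall z1 z2 : 'rV[int]_2, Bf G (z1 *m S) (z2 *m S) = Bf Gl z1 z2.

Definition e1 : 'rV[int]_2 := delta_mx 0 0.

(* Main.v *)
Require Import Defs.
From mathcomp Require Import all_boot all_order all_algebra.
Import Order.TTheory GRing.Theory Num.Theory.
Local Open Scope ring_scope.
Lemma BfQ n (G : 'M[int]_n) x y : (Bf G x y)%:~R = Bf (toQm G) (toQv x) (toQv y) :> rat.
Proof. by rewrite /Bf /toQm /toQv map_trmx -!map_mxM [RHS]mxE. Qed.
Lemma toQvM m n (z : 'rV[int]_m) (S : 'M[int]_(m,n)) : toQv (z *m S) = toQv z *m toQm S.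
Proof. by rewrite /toQv /toQm map_mxM. Qed.
Lemma gram2E (A b a : int) i j : gram2 A b a i j = if (i : nat) == 0%N then (if (j : nat) == 0%N then A else b) else (if (j : nat) == 0%N then b else a).
Proof. by rewrite mxE. Qed.
Lemma Bf_delta n (G : 'M[int]_n) (S : 'M[int]_(2,n)) i j :
  Bf G (delta_mx 0 i *m S) (delta_mx 0 j *m S) = Bf (S *m G *m S^T) (delta_mx 0 i) (delta_mx 0 j).
Proof. by rewrite /Bf trmx_mul !mulmxA. Qed.
Lemma Bf_dd m (M : 'M[int]_m) i j : Bf M (delta_mx 0 i) (delta_mx 0 j) = M i j.
Proof. by rewrite /Bf -rowE trmx_delta -colE !mxE. Qed.
Lemma gram2_dd (A b a : int) i j : Bf (gram2 A b a) (delta_mx 0 i) (delta_mx 0 j) =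
  if (i : nat) == 0%N then (if (j : nat) == 0%N then A else b) else (if (j : nat) == 0%N then b else a).
Proof. by rewrite Bf_dd mxE. Qed.

Theorem lemma2p3 (A s alpha beta a b : int) (n : nat) (G : 'M[int]_n) (w : 'rV[int]_n) :
  0 < A -> 0 < s ->
  congz s a alpha -> congz s b beta ->
  0 < A * a - b ^+ 2 ->
  lattice_gram G ->
  Qf G w = A ->
  prec G A alpha beta s w ->
  (exists S : 'M[int]_(2, n), is_rep (gram2 A b a) G S) ->
  exists S : 'M[int]_(2, n), is_rep (gram2 A b a) G S /\ e1 *m S = w.
Proof.
move=> _ _ ha hb _ _ _ Hprec [S HS].
pose v := row 0 S; pose u := row 1 S.
have Hv : v = delta_mx 0 0 *m S by rewrite /v rowE.
have Hu : u = delta_mx 0 1 *m S by rewrite /u rowE.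
have hQv : Qf G v = A by rewrite /Qf Hv HS gram2_dd.
have hQu : congz s (Qf G u) alpha by rewrite /Qf Hu HS gram2_dd.
have hBuv : congz s (Bf G u v) beta by rewrite Hu Hv HS gram2_dd.
have [T [[[HO [Hs Hv']] HvT] Hut]] := Hprec v hQv u hQu hBuv.
have [y Hy] : inL (toQv u *m T) by apply: Hut; exists 0; rewrite scaler0 addr0.
pose S' : 'M[int]_(2, n) := \matrix_(i < 2, j < n) if (i : nat) == 0%N then w 0 j else y 0 j.
have key : toQm S' = toQm S *m T.
  apply/row_matrixP => i; rewrite row_mul /toQm -map_row -[row _ (map_mx _ S)]map_row.
  case: i => [[|[|k]] Hi] //.
  - have -> : Ordinal Hi = 0 by apply: val_inj.
    rewrite -/v -[map_mx _ (row 0 S)]/(toQv v) HvT.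
    by apply/rowP => j; rewrite !mxE.
  - have -> : Ordinal Hi = 1 by apply: val_inj.
    rewrite -/u -[map_mx _ (row 1 S)]/(toQv u) Hy.
    by apply/rowP => j; rewrite !mxE.
exists S'; split.
  move=> z1 z2; apply: (@intr_inj rat).
  by rewrite !BfQ !toQvM key !mulmxA -!toQvM HO -!BfQ HS.
have -> : e1 *m S' = row 0 S' by rewrite rowE.
by apply/rowP => j; rewrite !mxE.
Qed.
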